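(* Let $(X,\mu)$ be a Lebesgue space with a continuous probability measure $\mu$, and let $\rho$ be a semimetric on $X$, measurable as a function on $(X\times X,\mu\times\mu)$, which satisfies the ultrametric inequality $\rho(x,z)\le\max(\rho(x,y),\rho(y,z))$ for $(\mu\times\mu\times\mu)$-almost all triples $(x,y,z)\in X^3$. Then there exists an ultrametric $\tilde\rho$ on $X$ which coincides with $\rho$ for $(\mu\times\mu)$-almost all pairs and satisfies $\tilde\rho(x,z)\le\max(\tilde\rho(x,y),\tilde\rho(y,z))$ for all triples $x,y,z\in X$.
   Context: A semimetric is a non-negative symmetric function on $X\times X$ satisfying the triangle inequality and vanishing on the diagonal (it may vanish off the diagonal). *)

(* Defs.v *)
From HB Require Import structures.
From mathcomp Require Import all_boot all_order all_algebra.
From mathcomp Require Import all_classical all_reals all_analysis.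
Set Implicit Arguments. Unset Strict Implicit. Unset Printing Implicit Defensive.
Import Order.TTheory GRing.Theory Num.Theory.
Local Open Scope classical_set_scope.
Local Open Scope ring_scope.

(* (X, mu) is a Lebesgue space with continuous (non-atomic) probability
   measure: it is isomorphic mod 0 to ([0,1], Lebesgue measure). *)
Definition continuous_lebesgue_space (d : measure_display) (X : measurableType d)
    (R : realType) (mu : {measure set X -> \bar R}) : Prop :=
  exists (f : X -> R) (g : R -> X),
    [/\ measurable_fun setT f,
        measurable_fun setT g,
        (forall A : set R, measurable A ->
           mu (f @^-1` A) = (@lebesgue_measure R) (A `&` `[0%R, 1%R]%classic)),
        {ae mu, forall x, g (f x) = x} &
        {ae (@lebesgue_measure R), forall t, `[0%R, 1%R]%classic t -> f (g t) = t}].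

Definition semimetric (X : Type) (R : realType) (rho : X -> X -> R) : Prop :=
  [/\ forall x y, 0 <= rho x y,
      forall x y, rho x y = rho y x,
      forall x, rho x x = 0 &
      forall x y z, rho x z <= rho x y + rho y z].

Definition ultrametric (X : Type) (R : realType) (rho : X -> X -> R) : Prop :=
  semimetric rho /\ forall x y z, rho x z <= Num.max (rho x y) (rho y z).

(* measurability of a function with respect to a measure space (i.e. w.r.t.
   the mu-completion of the sigma-algebra): it agrees with a measurable
   function outside a mu-negligible set. *)
Definition measurable_wrt (d : measure_display) (T : measurableType d)
    (R : realType) (mu : {measure set T -> \bar R}) (h : T -> R) : Prop :=
  exists h' : T -> R, measurable_fun setT h' /\ {ae mu, forall t, h t = h' t}.

(* Main.v *)
Require Import Defs.
From HB Require Import structures.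
From mathcomp Require Import all_boot all_order all_algebra.
From mathcomp Require Import all_classical all_reals all_analysis.
From mathcomp Require Import measurable_realfun lra.
Import Order.TTheory GRing.Theory Num.Theory.
Local Open Scope classical_set_scope.
Local Open Scope ring_scope.

Section FN.
Local Open Scope ereal_scope.
Context d1 d2 (T1 : measurableType d1) (T2 : measurableType d2) (R : realType).
Variable m1 : {measure set T1 -> \bar R}.
Variable m2 : {sigma_finite_measure set T2 -> \bar R}.

Lemma fubini_null (A : set (T1 * T2)) : (m1 \x m2).-negligible A ->
  {ae m1, forall x, m2.-negligible (xsection A x)}.
Proof.
move=> [N [mN N0 AN]].
have h : \int[m1]_x `|(m2 \o xsection N) x| = 0.
  rewrite -N0; apply: eq_integral => x _; rewrite gee0_abs // ; exact: measure_ge0 (measurable_xsection _ _).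
move/ae_eq_integral_abs : h => /(_ measurableT (@measurable_fun_xsection _ _ _ _ _ m2 N mN)) h.
apply: filterS h => x /(_ I) h0; exists (xsection N x); split => //.
- exact: measurable_xsection.
- move=> y; rewrite /xsection/= inE => /AN Ny; rewrite inE; exact: Ny.
Qed.
End FN.


Section Perm.
Local Open Scope ereal_scope.
Context d (X : measurableType d) (R : realType) (mu : probability X R).

Let P2 := (mu \x mu).
Let P3 := (P2 \x mu).

Definition sig3 (t : (X * X) * X) := ((t.1.1, t.2), t.1.2).
Definition tau3 (t : (X * X) * X) := ((t.1.2, t.1.1), t.2).

Lemma measurable_sig3 : measurable_fun setT sig3.
Proof.
rewrite /sig3; apply: measurable_fun_pair; last first.
  exact: measurableT_comp measurable_snd measurable_fst.
apply: measurable_fun_pair; last exact: measurable_snd.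
exact: measurableT_comp measurable_fst measurable_fst.
Qed.

Lemma measurable_tau3 : measurable_fun setT tau3.
Proof.
rewrite /tau3; apply: measurable_fun_pair; last exact: measurable_snd.
apply: measurable_fun_pair.
  exact: measurableT_comp measurable_snd measurable_fst.
exact: measurableT_comp measurable_fst measurable_fst.
Qed.

Lemma P3_iter (E : set ((X * X) * X)) : measurable E ->
  P3 E = \int[mu]_a \int[mu]_b mu (xsection E (a, b)).
Proof.
move=> mE.
rewrite /P3 /product_measure1.
rewrite (fubini_tonelli1 (mu \o xsection E))//.
exact: measurable_fun_xsection.
Qed.


Lemma xsection_indicE (E : set ((X * X) * X)) p : measurable E ->
  mu (xsection E p) = \int[mu]_c (\1_E (p, c))%:E.
Proof.
move=> mE; rewrite -[xsection E p]setIT -integral_indic//; last exact: measurable_xsection.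
by apply: eq_integral => c _; rewrite !indicE mem_xsection.
Qed.

Lemma P3_sig (E : set ((X * X) * X)) : measurable E -> P3 (sig3 @^-1` E) = P3 E.
Proof.
move=> mE.
have mE' : measurable (sig3 @^-1` E).
  by rewrite -[_ @^-1` _]setTI; exact: measurable_sig3.
rewrite !P3_iter//; apply: eq_integral => a _.
transitivity (\int[mu]_b \int[mu]_c (\1_E ((a, c), b))%:E).
  by apply: eq_integral => b _; rewrite xsection_indicE//.
rewrite (fubini_tonelli (fun bc => (\1_E ((a, bc.2), bc.1))%:E))//=; last first.
  apply/measurable_EFinP; apply: measurableT_comp; first exact: measurable_indic.
  apply: measurable_fun_pair; last exact: measurable_fst.
  apply: measurable_fun_pair; last exact: measurable_snd.
  exact: measurable_cst.
by apply: eq_integral => c _; rewrite xsection_indicE.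
Qed.

Lemma P3_tau (E : set ((X * X) * X)) : measurable E -> P3 (tau3 @^-1` E) = P3 E.
Proof.
move=> mE.
have mE' : measurable (tau3 @^-1` E).
  by rewrite -[_ @^-1` _]setTI; exact: measurable_tau3.
rewrite !P3_iter//.
transitivity (\int[mu]_a \int[mu]_b (mu \o xsection E) (b, a)).
  apply: eq_integral => a _; apply: eq_integral => b _ /=.
  congr (mu _); apply/seteqP; split => c; rewrite /xsection /= !inE //.
rewrite (fubini_tonelli (fun ab => (mu \o xsection E) (ab.2, ab.1)))//=.
exact: (measurableT_comp (@measurable_fun_xsection _ _ _ _ _ mu E mE)
  (@measurable_swap _ _ X X)).
Qed.

End Perm.
Arguments sig3 {d X}.
Arguments tau3 {d X}.

Section Neg.
Local Open Scope ereal_scope.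
Context d (X : measurableType d) (R : realType) (mu : probability X R).
Let P2 := (mu \x mu).
Let P3 := (P2 \x mu).

Lemma neg_sig (B : set ((X * X) * X)) : P3.-negligible B ->
  P3.-negligible (sig3 @^-1` B).
Proof.
move=> [N [mN N0 BN]]; exists (sig3 @^-1` N); split.
- by rewrite -[_ @^-1` _]setTI; exact: measurable_sig3.
- by rewrite /P3 P3_sig.
- by move=> t /= /BN.
Qed.

Lemma neg_tau (B : set ((X * X) * X)) : P3.-negligible B ->
  P3.-negligible (tau3 @^-1` B).
Proof.
move=> [N [mN N0 BN]]; exists (tau3 @^-1` N); split.
- by rewrite -[_ @^-1` _]setTI; exact: measurable_tau3.
- by rewrite /P3 P3_tau.
- by move=> t /= /BN.
Qed.

Lemma neg_rect (N : set (X * X)) : P2.-negligible N ->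
  P3.-negligible (N `*` setT).
Proof.
move=> [M [mM M0 NM]]; exists (M `*` setT); split.
- exact: measurableX.
- by move: M0; rewrite /P3 /P2 product_measure1E// => h; rewrite [X in X * _](_ : _ = 0%E) ?mul0e //; exact: h.
- by move=> [p y] [/= /NM].
Qed.

Lemma neg_rectL (N : set X) : mu.-negligible N -> P2.-negligible (N `*` setT).
Proof.
move=> [M [mM M0 NM]]; exists (M `*` setT); split.
- exact: measurableX.
- by move: M0; rewrite /P2 product_measure1E// => h; rewrite [X in X * _](_ : _ = 0%E) ?mul0e //; exact: h.
- by move=> [p y] [/= /NM].
Qed.

Lemma neg_rectR (N : set X) : mu.-negligible N -> P2.-negligible (setT `*` N).
Proof.
move=> [M [mM M0 NM]]; exists (setT `*` M); split.
- exact: measurableX.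
- by move: M0; rewrite /P2 product_measure1E// => h; rewrite [X in _ * X](_ : _ = 0%E) ?mule0 //; exact: h.
- by move=> [p y] [_ /= /NM].
Qed.

End Neg.
Arguments neg_sig {d X R mu B}.
Arguments neg_tau {d X R mu B}.
Arguments neg_rect {d X R mu N}.
Arguments neg_rectL {d X R mu N}.
Arguments neg_rectR {d X R mu N}.


Lemma inf_eq (R : realType) (S : set R) a :
  (forall r, S r -> a <= r) -> (forall e, 0 < e -> S (a + e)) -> inf S = a.
Proof.
move=> lb ae; have ne : nonempty S by exists (a + 1); exact: ae.
apply/eqP; rewrite eq_le; apply/andP; split; last exact: lb_le_inf.
apply/ler_addgt0Pr => e e0; apply: ge_inf; last exact: ae.
by exists a.
Qed.

Section Eqv.
Context d (X : measurableType d) (R : realType) (mu : probability X R).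
Variable A : X -> set X.
Hypothesis mA : forall x, measurable (A x).

Definition eqv x z := x = z \/
  ((0 < mu (A x `&` A z))%E /\ mu ((A x `\` A z) `|` (A z `\` A x)) = 0%E).

Lemma eqv_refl x : eqv x x. Proof. by left. Qed.

Lemma eqv_sym x z : eqv x z -> eqv z x.
Proof. by move=> [->|[h1 h2]]; [left|right; rewrite setIC setUC]. Qed.

Lemma eqv_trans x y z : eqv x y -> eqv y z -> eqv x z.
Proof.
move=> [->//|[p1 n1]] [<-|[p2 n2]]; first by right.
right.
have mD u v : measurable ((A u `\` A v) `|` (A v `\` A u)).
  by apply: measurableU; apply: measurableD.
have n3 : mu ((A x `\` A z) `|` (A z `\` A x)) = 0%E.
  apply/eqP; rewrite eq_le measure_ge0 andbT.
  rewrite -(adde0 0%E) -[X in (_ + X)%E]n2 -[X in (X + _)%E]n1.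
  apply: le_trans (measureU2 _ (mD _ _) (mD _ _)).
  apply: le_measure; rewrite ?inE //; first exact: measurableU.
  move=> w /= [[Ax nAz]|[Az nAx]].
    by have [Ay|nAy] := pselect (A y w); [right; left|left; left].
  by have [Ay|nAy] := pselect (A y w); [left; right|right; right].
split => //.
apply: lt_le_trans p1 _.
have mI u v : measurable (A u `&` A v) by apply: measurableI.
apply: le_trans (_ : (mu (A x `&` A z) + mu ((A y `\` A z) `|` (A z `\` A y)) <= _)%E).
  apply: le_trans (measureU2 _ (mI _ _) (mD _ _)).
  apply: le_measure; rewrite ?inE //; first exact: measurableU.
  move=> w /= [Ax Ay].
  by have [Az|nAz] := pselect (A z w); [left|right; left].
by rewrite n2 adde0.
Qed.

End Eqv.
Arguments eqv {d X R} mu A.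
Arguments eqv_refl {d X R mu A}.
Arguments eqv_sym {d X R mu A x z}.
Arguments eqv_trans {d X R mu A} mA {x y z}.

Section Main.
Context d (X : measurableType d) (R : realType) (mu : probability X R).
Variable g : X * X -> R.
Hypothesis mg : measurable_fun setT g.

Definition Aset (s : R) (x : X) := [set y | g (x, y) <= s].

Lemma Aset_xsection s x : Aset s x = xsection [set p | g p <= s] x.
Proof. by apply/seteqP; split => y; rewrite /xsection /= inE. Qed.

Lemma mGs s : measurable [set p | g p <= s].
Proof.
rewrite (_ : [set p | _] = g @^-1` `]-oo, s]); last first.
  by apply/seteqP; split => p /=; rewrite in_itv.
by rewrite -[_ @^-1` _]setTI; apply: mg => //; exact: measurable_itv.
Qed.

Lemma mAset s x : measurable (Aset s x).
Proof. by rewrite Aset_xsection; exact: measurable_xsection (mGs s). Qed.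

Definition eqvs s := eqv mu (Aset s).

Definition Sset x z := [set r : R | 0 < r /\
  forall q : rat, r <= ratr q -> eqvs (ratr q) x z].
Definition fin x z := exists r, Sset x z r.
Definition rho0 x z := inf (Sset x z).

Lemma Sset_up x z r r' : r <= r' -> Sset x z r -> Sset x z r'.
Proof.
move=> rr' [r0 h]; split; first exact: lt_le_trans rr'.
by move=> q rq; apply: h; exact: le_trans rq.
Qed.

Lemma Sset_sym x z r : Sset x z r -> Sset z x r.
Proof. by move=> [r0 h]; split => // q /h; exact: eqv_sym. Qed.

Lemma Sset_trans x y z r : Sset x y r -> Sset y z r -> Sset x z r.
Proof.
move=> [r0 h1] [_ h2]; split => // q rq.
exact: (eqv_trans (mAset _) (h1 _ rq) (h2 _ rq)).
Qed.

Lemma Sset_refl x r : 0 < r -> Sset x x r.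
Proof. by move=> r0; split => // q _; exact: eqv_refl. Qed.

Lemma fin_refl x : fin x x.
Proof. by exists 1; exact: Sset_refl. Qed.

Lemma fin_sym x z : fin x z -> fin z x.
Proof. by move=> [r h]; exists r; exact: Sset_sym. Qed.

Lemma fin_trans x y z : fin x y -> fin y z -> fin x z.
Proof.
move=> [r1 h1] [r2 h2]; exists (Num.max r1 r2); apply: Sset_trans.
  by apply: Sset_up h1; rewrite le_max lexx.
by apply: Sset_up h2; rewrite le_max lexx orbT.
Qed.

Lemma Sset_lb x z : has_lbound (Sset x z).
Proof. by exists 0 => r [/ltW]. Qed.

Lemma rho0_ge0 x z : 0 <= rho0 x z.
Proof.
have [[r hr]|nf] := pselect (fin x z).
  by apply: lb_le_inf; [exists r|move=> r' [/ltW]].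
rewrite /rho0 (_ : Sset x z = set0) ?inf0 //.
by apply/seteqP; split => r // hr; apply: nf; exists r.
Qed.

Lemma rho0_refl x : rho0 x x = 0.
Proof.
apply: inf_eq => [r [/ltW]//|e e0]; rewrite add0r; exact: Sset_refl.
Qed.

Lemma rho0_sym x z : rho0 x z = rho0 z x.
Proof.
by rewrite /rho0; congr inf; apply/seteqP; split => r; exact: Sset_sym.
Qed.

Lemma rho0_ultra x y z : fin x y -> fin y z ->
  rho0 x z <= Num.max (rho0 x y) (rho0 y z).
Proof.
move=> f1 f2; apply/ler_addgt0Pr => e e0.
have hi1 : has_inf (Sset x y) by split; [case: f1 => r; exists r|exact: Sset_lb].
have hi2 : has_inf (Sset y z) by split; [case: f2 => r; exists r|exact: Sset_lb].
have [r1 S1 lt1] := inf_adherent e0 hi1.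
have [r2 S2 lt2] := inf_adherent e0 hi2.
have S3 : Sset x z (Num.max r1 r2).
  apply: Sset_trans.
    by apply: Sset_up S1; rewrite le_max lexx.
  by apply: Sset_up S2; rewrite le_max lexx orbT.
apply: le_trans (ge_inf (Sset_lb x z) S3) _.
rewrite ge_max; apply/andP; split.
  apply: le_trans (ltW lt1) _; rewrite lerD2r le_max lexx //.
apply: le_trans (ltW lt2) _; rewrite lerD2r le_max lexx orbT //.
Qed.

End Main.
Arguments Aset {d X R} g s x.
Arguments Aset_xsection {d X R} g s x.
Arguments mGs {d X R g} mg s.
Arguments mAset {d X R g} mg s x.
Arguments eqvs {d X R} mu g s.
Arguments Sset {d X R} mu g x z.
Arguments fin {d X R} mu g x z.
Arguments rho0 {d X R} mu g x z.


Section Claim.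
Context d (X : measurableType d) (R : realType) (mu : probability X R).
Variable g : X * X -> R.
Hypothesis mg : measurable_fun setT g.
Local Notation P2 := (mu \x mu)%E.
Local Notation P3 := ((mu \x mu) \x mu)%E.

Lemma pos_ae s : {ae P2, forall p, g p <= s -> (0 < mu (Aset g s p.1))%E}.
Proof.
set Gs := [set p | g p <= s].
have mGs' : measurable Gs := mGs mg s.
set f := mu \o xsection Gs.
have mf : measurable_fun setT f := @measurable_fun_xsection _ _ _ _ _ mu _ mGs'.
set Z := f @^-1` [set 0%E].
have mZ : measurable Z.
  by rewrite -[Z]setTI; apply: mf => //; exact: measurable_set1.
exists (Gs `&` (Z `*` setT)); split.
- by apply: measurableI => //; exact: measurableX.
- transitivity (\int[mu]_x (mu (xsection (Gs `&` (Z `*` setT)) x)))%E => //.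
  apply: integral0_eq => x _.
  have [Zx|nZx] := pselect (Z x).
    apply: (@subset_measure0 _ _ _ mu _ (xsection Gs x)).
    + by apply: measurable_xsection; apply: measurableI => //; exact: measurableX.
    + exact: measurable_xsection.
    + by move=> y; rewrite /xsection /= !inE => -[].
    + exact: Zx.
  rewrite (_ : xsection _ x = set0) ?measure0//.
  by apply/seteqP; split => y //; rewrite /xsection /= inE => -[_ [/= ?]].
- move=> p /= /not_implyP [gp npos]; split => //; split => //=.
  rewrite /Z /f /= -Aset_xsection.
  by apply/eqP; rewrite eq_le measure_ge0 andbT leNgt; apply/negP.
Qed.


Variable rho : X -> X -> R.
Hypothesis hsym : forall x y, rho x y = rho y x.
Hypothesis hg : {ae P2, forall p : X * X, rho p.1 p.2 = g p}.
Definition U3 (t : (X * X) * X) :=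
  rho t.1.1 t.2 <= Num.max (rho t.1.1 t.1.2) (rho t.1.2 t.2).
Hypothesis hU : {ae P3, forall t, U3 t}.

Definition Good (t : (X * X) * X) :=
  [/\ g (t.1.1, t.2) = rho t.1.1 t.2, g (t.1.2, t.2) = rho t.1.2 t.2,
      U3 (tau3 t), U3 t & U3 (sig3 t)].

Lemma good_ae : {ae P3, forall t, Good t}.
Proof.
have Ng : P2.-negligible (~` [set p | rho p.1 p.2 = g p]) := hg.
have NU : P3.-negligible (~` [set t | U3 t]) := hU.
have h1 : {ae P3, forall t, g (t.1.1, t.2) = rho t.1.1 t.2}.
  apply: (negligibleS _ (neg_sig (neg_rect Ng))) => t /= h; split => //=.
  by move=> e; apply: h; rewrite e.
have h2 : {ae P3, forall t, g (t.1.2, t.2) = rho t.1.2 t.2}.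
  apply: (negligibleS _ (neg_tau (neg_sig (neg_rect Ng)))) => t /= h.
  by split => //= e; apply: h; rewrite e.
have h3 : {ae P3, forall t, U3 (tau3 t)}.
  by apply: (negligibleS _ (neg_tau NU)); move=> ?.
have h5 : {ae P3, forall t, U3 (sig3 t)}.
  by apply: (negligibleS _ (neg_sig NU)); move=> ?.
change (P3.-negligible (~` [set t | Good t])).
apply: (negligibleS _ (negligibleU h1 (negligibleU h2 (negligibleU h3
  (negligibleU NU h5))))).
move=> t /= nG.
have [?|?] := pselect (g (t.1.1, t.2) = rho t.1.1 t.2); last by left.
have [?|?] := pselect (g (t.1.2, t.2) = rho t.1.2 t.2); last by right; left.
have [?|?] := pselect (U3 (tau3 t)); last by right; right; left.
have [?|?] := pselect (U3 t); last by right; right; right; left.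
have [?|?] := pselect (U3 (sig3 t)); last by right; right; right; right.
by exfalso; apply: nG; split.
Qed.

Lemma sec_ae : {ae P2, forall p, mu.-negligible [set y | ~ Good (p, y)]}.
Proof.
have H := @fubini_null _ _ _ _ _ P2 mu _ good_ae.
change (P2.-negligible (~` [set p | mu.-negligible [set y | ~ Good (p, y)]])).
apply: (negligibleS _ H) => p /= nN hN; apply: nN.
by apply: (negligibleS _ hN) => y; rewrite /xsection /= inE.
Qed.

Lemma claim s : {ae P2, forall p : X * X, p.1 <> p.2 ->
  (rho p.1 p.2 <= s <-> eqvs mu g s p.1 p.2)}.
Proof.
have Ng : P2.-negligible (~` [set p | rho p.1 p.2 = g p]) := hg.
have Ns : P2.-negligible (~` [set p | mu.-negligible [set y | ~ Good (p, y)]])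
  := sec_ae.
have Np : P2.-negligible (~` [set p | g p <= s -> (0 < mu (Aset g s p.1))%E])
  := pos_ae s.
change (P2.-negligible (~` [set p : X * X | p.1 <> p.2 ->
  (rho p.1 p.2 <= s <-> eqvs mu g s p.1 p.2)])).
apply: (negligibleS _ (negligibleU Ng (negligibleU Ns Np))).
move=> [x z] /= nC; apply: contrapT => nU; apply: nC => /= xz.
have e1 : rho x z = g (x, z) by apply: contrapT => h; apply: nU; left.
have e2 : mu.-negligible [set y | ~ Good ((x, z), y)].
  by apply: contrapT => h; apply: nU; right; left.
have e3 : g (x, z) <= s -> (0 < mu (Aset g s x))%E.
  by apply: contrapT => h; apply: nU; right; right.
have [M [mM M0 NM]] := e2.
have mA := mAset mg s.
split.
- move=> hr; right.
  have px : (0 < mu (Aset g s x))%E by apply: e3; rewrite -e1.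
  have mD : measurable ((Aset g s x `\` Aset g s z) `|` (Aset g s z `\` Aset g s x)).
    by apply: measurableU; apply: measurableD.
  have hD : (Aset g s x `\` Aset g s z) `|` (Aset g s z `\` Aset g s x) `<=` M.
    move=> y hy; apply: NM => /= -[G1 G2 G3 G4 G5].
    move: G1 G2 G3 G4 G5; rewrite /U3 /tau3 /sig3 /= => G1 G2 G3 G4 G5.
    case: hy => -[hx hz]; move: hx hz; rewrite /Aset /= => hx hz; apply: hz.
      rewrite G2; apply: le_trans G3 _.
      by rewrite ge_max (hsym z x) hr /= -G1 hx.
    rewrite G1; apply: le_trans G4 _.
    by rewrite ge_max hr /= -G2 hx.
  have D0 := subset_measure0 mD mM hD M0.
  split => //.
  apply: lt_le_trans px _.
  apply: le_trans (_ : (mu (Aset g s x `&` Aset g s z) +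
     mu ((Aset g s x `\` Aset g s z) `|` (Aset g s z `\` Aset g s x)) <= _)%E).
    apply: le_trans (measureU2 _ (measurableI _ _ (mA _) (mA _)) mD).
    apply: le_measure; rewrite ?inE //; first by apply: measurableU => //; exact: measurableI.
    move=> y /= Ax.
    by have [Az|nAz] := pselect (Aset g s z y); [left|right; left].
  by rewrite D0 adde0.
- move=> [//|[pos _]]; apply: contrapT => nr.
  have hI : Aset g s x `&` Aset g s z `<=` M.
    move=> y [hx hz]; move: hx hz; rewrite /Aset /= => hx hz; apply: NM => /= -[G1 G2 G3 G4 G5].
    move: G1 G2 G5; rewrite /U3 /sig3 /= => G1 G2 G5; apply: nr.
    apply: le_trans G5 _.
    by rewrite ge_max -G1 hx /= (hsym y z) -G2 hz.
  have I0 := subset_measure0 (measurableI _ _ (mA _) (mA _)) mM hI M0.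
  by rewrite I0 ltxx in pos.
Qed.

End Claim.


Lemma ae_mono d (T : measurableType d) (R : realType) (m : {measure set T -> \bar R})
  (P Q : T -> Prop) : (forall x, P x -> Q x) -> {ae m, forall x, P x} -> {ae m, forall x, Q x}.
Proof.
move=> PQ h; change (m.-negligible (~` [set x | Q x])).
by apply: (negligibleS _ h) => x /= nQ Px; exact: nQ (PQ _ Px).
Qed.

Lemma ae_ex d (T : measurableType d) (R : realType) (m : probability T R)
  (P : T -> Prop) : {ae m, forall x, P x} -> exists x, P x.
Proof.
move=> h; apply: contrapT => nE.
have [N [mN N0 sub]] : m.-negligible (~` [set x | P x]) := h.
have NT : N = setT.
  by apply/seteqP; split => // x _; apply: sub => Px; apply: nE; exists x.
by move: N0; rewrite NT probability_setT => /eqP; rewrite onee_eq0.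
Qed.

Arguments ae_mono {d T R m P Q}.
Arguments ae_ex {d T R m P}.

Theorem mainTheorem4 (d : measure_display) (X : measurableType d) (R : realType)
    (mu : probability X R) (rho : X -> X -> R) :
  continuous_lebesgue_space mu ->
  semimetric rho ->
  measurable_wrt (mu \x mu)%E (fun p : X * X => rho p.1 p.2) ->
  {ae ((mu \x mu) \x mu)%E, forall t : (X * X) * X,
     rho t.1.1 t.2 <= Num.max (rho t.1.1 t.1.2) (rho t.1.2 t.2)} ->
  exists rho' : X -> X -> R,
    ultrametric rho' /\
    {ae (mu \x mu)%E, forall p : X * X, rho' p.1 p.2 = rho p.1 p.2}.
Proof.
move=> _ [h0 hsym hdiag htri] [g [mg hg]] hU.
have cl := @claim _ _ _ mu g mg rho hsym hg hU.
pose CQ (p : X * X) := forall q : rat, p.1 <> p.2 ->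
  (rho p.1 p.2 <= ratr q <-> eqvs mu g (ratr q) p.1 p.2).
have hCQ : {ae (mu \x mu)%E, forall p, CQ p}.
  have H : {ae (mu \x mu)%E, forall p, forall n : nat, forall q : rat,
      pickle q = n -> p.1 <> p.2 ->
      (rho p.1 p.2 <= ratr q <-> eqvs mu g (ratr q) p.1 p.2)}.
    apply: ae_foralln => n.
    have [[q0 e]|ne] := pselect (exists q : rat, pickle q = n).
      apply: ae_mono (cl (ratr q0)) => p h q eq.
      by have -> : q = q0 by apply: (pcan_inj (@pickleK rat)); rewrite eq e.
    by apply: aeW => p q eq; exfalso; apply: ne; exists q.
  by apply: ae_mono H => p h q; exact: h (pickle q) q erefl.
have Schar : forall x z, CQ (x, z) -> x <> z -> forall r,
    Sset mu g x z r <-> (0 < r /\ rho x z <= r).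
  move=> x z hc xz r; split.
    move=> [r0 hS]; split => //; rewrite leNgt; apply/negP => rlt.
    have [q /[!in_itv] /andP[rq qr]] := rat_in_itvoo rlt.
    have := hS q (ltW rq); rewrite -(hc q xz) /= => /(lt_le_trans qr).
    by rewrite ltxx.
  move=> [r0 rr]; split => // q rq; apply/(hc q xz) => /=.
  exact: le_trans rq.
have rho0E : forall x z, CQ (x, z) -> rho0 mu g x z = rho x z.
  move=> x z hc; have [<-|xz] := pselect (x = z).
    by rewrite rho0_refl hdiag.
  apply: inf_eq => [r /(Schar _ _ hc xz r) [] //|e e0].
  apply/(Schar _ _ hc xz); split; last by rewrite lerDl ltW.
  by apply: ltr_wpDl => //; exact: h0.
have hfin : {ae (mu \x mu)%E, forall p : X * X, fin mu g p.1 p.2}.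
  apply: ae_mono hCQ => -[x z] hc /=.
  have [<-|xz] := pselect (x = z); first exact: fin_refl.
  exists (rho x z + 1); apply/(Schar _ _ hc xz); split; last by rewrite lerDl.
  by apply: ltr_wpDl => //; exact: h0.
have [x0 hx0] := ae_ex (@fubini_null _ _ _ _ _ mu mu _ hfin).
have Nz : mu.-negligible [set y | ~ fin mu g x0 y].
  by apply: (negligibleS _ hx0) => y /= h; rewrite /xsection /= inE.
pose pi y := if pselect (fin mu g x0 y) then y else x0.
have finpi y : fin mu g x0 (pi y).
  rewrite /pi; destruct (pselect (fin mu g x0 y)) as [h|h]; [exact: h|exact: fin_refl].
have finpp y z : fin mu g (pi y) (pi z).
  exact: (@fin_trans _ _ _ mu g mg _ _ _ (@fin_sym _ _ _ mu g _ _ (finpi y)) (finpi z)).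
exists (fun x z => rho0 mu g (pi x) (pi z)); split.
  split; last by move=> x y z; exact: (@rho0_ultra _ _ _ mu g mg _ _ _ (finpp x y) (finpp y z)).
  split.
  - by move=> x y; exact: rho0_ge0.
  - by move=> x y; exact: rho0_sym.
  - by move=> x; exact: rho0_refl.
  - move=> x y z; apply: le_trans (@rho0_ultra _ _ _ mu g mg _ _ _ (finpp x y) (finpp y z)) _.
    rewrite ge_max; apply/andP; split.
      by rewrite lerDl rho0_ge0.
    by rewrite lerDr rho0_ge0.
have hC0 : {ae (mu \x mu)%E, forall p : X * X, fin mu g x0 p.1 /\ fin mu g x0 p.2}.
  change ((mu \x mu)%E.-negligible (~` [set p : X * X | fin mu g x0 p.1 /\ fin mu g x0 p.2])).
  apply: (negligibleS _ (negligibleU (neg_rectL Nz) (neg_rectR Nz))).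
  move=> [x z] /= h.
  have [f1|f1] := pselect (fin mu g x0 x); last by left.
  have [f2|f2] := pselect (fin mu g x0 z); last by right.
  by exfalso; apply: h.
apply: ae_mono (filterI hCQ hC0) => -[x z] [hc [f1 f2]] /=.
rewrite /pi; destruct (pselect (fin mu g x0 x)) as [h1|h1]; last by [].
destruct (pselect (fin mu g x0 z)) as [h2|h2]; last by [].
exact: rho0E.
Qed.
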